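(* Let $t\in\frac{m+n}{2}+\mathbb Z$ and $s:=t+\frac{n-m}{2}-1\in\mathbb Z$. (a) In the non-exceptional case, $t$ satisfies $|t-\kappa|<L+\frac12$ (equivalently, by the characterization of critical numbers, $t\in\mathrm{Crit}$) if and only if $$\check\mu_{a_j}\ge\lambda_j-s\ge\check\mu_{1+a_j}\quad\text{for } j=1,\dots,m.\qquad(I_j)$$ (b) In the exceptional case, $t$ satisfies $|t-\kappa|<L+\frac12$ if and only if $s$ satisfies $(I_j)$ for all $j\neq\frac{m+1}{2}$ together with the middle condition $$\check\mu_{\frac{n-1}{2}}\ge\lambda_{\frac{m+1}{2}}-s\ge\check\mu_{\frac{n+3}{2}}-1\quad\text{if } k \text{ is even},$$ respectively $$\lambda_{\frac{m-1}{2}}\ge\check\mu_{\frac{n+1}{2}}+s\ge\lambda_{\frac{m+3}{2}}\quad\text{if } k \text{ is odd}.$$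
   Context: Let $n,m\ge1$, not both $1$. For $N\ge1$: $L_0^+(N):=\{(w,l)\in\mathbb Z\times\mathbb Z^N:\ l_1>\dots>l_N,\ l_i+l_{N+1-i}=0,\ w+l_i\equiv N+1 \bmod 2\}$; $X^+(N):=\{\mu\in\mathbb Z^N:\mu_1\ge\dots\ge\mu_N\}$; $X_0^+(N):=\{\mu\in X^+(N):\mu_i+\mu_{N+1-i}\text{ independent of } i\}$. Bijection $L_0^+(N)\to X_0^+(N)$: $(w,l)\mapsto\mu$, $\mu_i=\frac{w+l_i+2i-1-N}{2}$; inverse $w=\mu_1+\mu_N$, $l_i=2\mu_i+N+1-w-2i$. Let $\mu\in X_0^+(n)$, $\nu\in X_0^+(m)$ correspond to $(w,l)$, $(w',l')$. The dual weight is $\check\mu_i:=-\mu_{n+1-i}$. Put $\kappa:=\frac12(w+w'+1)$, $L_0:=\min\{|l_i-l'_j|: i\ne\frac{n+1}2\text{ or }j\ne\frac{m+1}2\}$, $L:=L_0/2$. The exceptional case: $n\equiv m\equiv1\bmod 2$. Standing assumptions: $l_1>l'_1$, and for every pair $(i,j)$ either $l_i\neq l'_j$ or ($n,m$ odd, $i=\frac{n+1}2$, $j=\frac{m+1}2$). Position tuple: $a_j\in\{1,\dots,n-1\}$ is the unique integer with $l_{a_j}>l'_j\ge l_{1+a_j}$, $j=1,\dots,m$. An index $j\in\{1,\dots,m-1\}$ is a jump index if $a_j<a_{j+1}$; $k$ is the number of jump indices. $\lambda_j:=\nu_j+a_j-j$. *)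

(* Defs.v *)
(* Vectors are 1-indexed functions nat -> int; only the
   entries with index in 1..n (resp. 1..m) are ever used. *)
From HB Require Import structures.
From mathcomp Require Import all_boot all_order all_algebra.
Set Implicit Arguments. Unset Strict Implicit. Unset Printing Implicit Defensive.
Import Order.TTheory GRing.Theory Num.Theory.
Local Open Scope ring_scope.

Definition X0plus (N : nat) (mu : nat -> int) : Prop :=
  (forall i : nat, (1 <= i < N)%N -> mu i.+1 <= mu i) /\
  (forall i : nat, (1 <= i <= N)%N -> mu i + mu (N.+1 - i)%N = mu 1%N + mu N).

Definition wt (N : nat) (mu : nat -> int) : int := mu 1%N + mu N.
Definition lw (N : nat) (mu : nat -> int) (i : nat) : int :=
  2 * mu i + (N.+1)%:Z - wt N mu - 2 * i%:Z.

Definition dualw (N : nat) (mu : nat -> int) (i : nat) : int := - mu (N.+1 - i)%N.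

Definition is_mid (N i : nat) : bool := odd N && (i == N.+1./2)%N.
Definition nonmid (n m i j : nat) : bool := ~~ (is_mid n i && is_mid m j).

(* L_0 = min |l_i - l'_j| over pairs (i,j) in [1,n]x[1,m] not both middle.
   The pair (1,1) is always admissible (n,m not both 1), so |l_1 - l'_1| is a
   valid seed for the minimum. *)
Definition L0 (n m : nat) (mu nu : nat -> int) : nat :=
  let d := `|lw n mu 1%N - lw m nu 1%N|%N in
  \big[minn/d]_(1 <= i < n.+1)
    \big[minn/d]_(1 <= j < m.+1 | nonmid n m i j) `|lw n mu i - lw m nu j|%N.

Definition kappa (n m : nat) (mu nu : nat -> int) : rat :=
  (wt n mu + wt m nu + 1)%:~R / 2.
Definition Lhalf (n m : nat) (mu nu : nat -> int) : rat := (L0 n m mu nu)%:R / 2.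

Definition standing (n m : nat) (mu nu : nat -> int) : Prop :=
  lw m nu 1%N < lw n mu 1%N /\
  forall i j : nat, (1 <= i <= n)%N -> (1 <= j <= m)%N ->
    lw n mu i != lw m nu j \/
    [/\ odd n, odd m, i = n.+1./2 & j = m.+1./2]%N.

Definition position_tuple (n m : nat) (mu nu : nat -> int) (a : nat -> nat) : Prop :=
  forall j : nat, (1 <= j <= m)%N ->
    (1 <= a j <= n.-1)%N /\
    lw m nu j < lw n mu (a j) /\ lw n mu (a j).+1 <= lw m nu j.

Definition njumps (m : nat) (a : nat -> nat) : nat :=
  count (fun j => a j < a j.+1)%N (iota 1 m.-1).

Definition lam (nu : nat -> int) (a : nat -> nat) (j : nat) : int :=
  nu j + (a j)%:Z - j%:Z.

Definition condI (n : nat) (mu nu : nat -> int) (a : nat -> nat) (s : int) (j : nat) : Prop :=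
  dualw n mu (a j) >= lam nu a j - s /\ lam nu a j - s >= dualw n mu (a j).+1.

(* Main.v *)
Require Import Defs.
From HB Require Import structures.
From mathcomp Require Import zify.
From mathcomp Require Import all_boot all_order all_algebra ring lra.
Import Order.TTheory GRing.Theory Num.Theory.
Local Open Scope ring_scope.

Lemma oddM2 n : odd n -> (n %% 2 = 1)%N. Proof. by move=> o; rewrite modn2 o. Qed.

Record CH (n m : nat) (l l' : nat -> int) (a : nat -> nat) : Prop := {
  ch_n : (2 <= n)%N;
  ch_m : (1 <= m)%N;
  ch_dec : forall i j, (1 <= i)%N -> (i < j)%N -> (j <= n)%N -> l j < l i;
  ch_dec' : forall i j, (1 <= i)%N -> (i < j)%N -> (j <= m)%N -> l' j < l' i;
  ch_sym : forall i, (1 <= i <= n)%N -> l (n.+1 - i)%N = - l i;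
  ch_sym' : forall i, (1 <= i <= m)%N -> l' (m.+1 - i)%N = - l' i;
  ch_st : forall i j, (1 <= i <= n)%N -> (1 <= j <= m)%N -> nonmid n m i j -> l i != l' j;
  ch_pos : forall j, (1 <= j <= m)%N ->
     [/\ (1 <= a j)%N, (a j <= n.-1)%N, l' j < l (a j) & l (a j).+1 <= l' j]
}.
Arguments ch_n {n m l l' a}. Arguments ch_m {n m l l' a}.
Arguments ch_dec {n m l l' a}. Arguments ch_dec' {n m l l' a}.
Arguments ch_sym {n m l l' a} _ {i}. Arguments ch_sym' {n m l l' a} _ {i}.
Arguments ch_st {n m l l' a} _ {i j}. Arguments ch_pos {n m l l' a} _ {j}.


Lemma dec_lt {N} {f : nat -> int} :
  (forall i j, (1 <= i)%N -> (i < j)%N -> (j <= N)%N -> f j < f i) ->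
  forall {i j}, (1 <= i <= N)%N -> (1 <= j <= N)%N -> f i < f j -> (j < i)%N.
Proof.
move=> H i j /andP[i1 iN] /andP[j1 jN] lt.
case: (ltngtP i j) => [ij|//|e].
- by have := H i j i1 ij jN; lia.
- by subst; lia.
Qed.

Lemma dec_le {N} {f : nat -> int} :
  (forall i j, (1 <= i)%N -> (i < j)%N -> (j <= N)%N -> f j < f i) ->
  forall {i j}, (1 <= i <= N)%N -> (1 <= j <= N)%N -> f i <= f j -> (j <= i)%N.
Proof.
move=> H i j /andP[i1 iN] /andP[j1 jN] le.
case: (leqP j i) => // ij; have := H i j i1 ij jN; lia.
Qed.

Lemma mono_le {N} {f : nat -> int} :
  (forall i j, (1 <= i)%N -> (i < j)%N -> (j <= N)%N -> f j < f i) ->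
  forall {i j}, (1 <= i)%N -> (i <= j)%N -> (j <= N)%N -> f j <= f i.
Proof.
move=> H i j i1 ij jN; case: (ltngtP i j) => [ij'|ji|e].
- by have := H i j i1 ij' jN; lia.
- lia.
- by subst; lia.
Qed.

Definition zI (l l' : nat -> int) (a : nat -> nat) (z : int) j :=
  1 - (l (a j) - l' j) <= z /\ z <= l' j - l (a j).+1 - 1.

Lemma nonmid_sym n m i j : (1 <= i <= n)%N -> (1 <= j <= m)%N ->
  nonmid n m i j -> nonmid n m (n.+1 - i) (m.+1 - j).
Proof.
rewrite /nonmid /is_mid => hi hj.
case on: (odd n); case om: (odd m) => //; rewrite ?andTb ?andFb ?andbF //.
have := oddM2 _ on; have := oddM2 _ om => o1 o2.
apply: contra => /andP[/eqP e1 /eqP e2]; apply/andP; split; apply/eqP;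
  move: e1 e2; rewrite -!divn2; lia.
Qed.

Lemma count_iota_rev (P Q : pred nat) q b c :
  (forall i, (i < q)%N -> P (b + i)%N = Q (c + q - 1 - i)%N) ->
  count P (iota b q) = count Q (iota c q).
Proof.
elim: q b => [//|q IH] b H.
have -> : iota c q.+1 = iota c q ++ [:: c + q]%N by rewrite -addn1 iotaD.
rewrite count_cat /= addn0.
have H0 := H 0%N isT; rewrite addn0 (_ : (c + q.+1 - 1 - 0 = c + q)%N) in H0; last by lia.
rewrite H0 addnC; congr (_ + _).
apply: IH => i hi; have := H i.+1 hi.
rewrite (_ : (b + i.+1 = b.+1 + i)%N); last by lia.
by rewrite (_ : (c + q.+1 - 1 - i.+1 = c + q - 1 - i)%N); last by lia.
Qed.

Section CoreS.
Variables (n m : nat) (l l' : nat -> int) (a : nat -> nat) (L z : int).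
Hypothesis C : CH n m l l' a.

Lemma range_a {j} : (1 <= j <= m)%N -> (1 <= a j <= n)%N /\ (1 <= (a j).+1 <= n)%N.
Proof. move=> hj; case: (ch_pos C hj) => a1 an _ _; have := ch_n C; lia. Qed.

Lemma forward_zI :
  (forall i j, (1 <= i <= n)%N -> (1 <= j <= m)%N -> nonmid n m i j -> L <= `|l i - l' j|) ->
  forall j, (1 <= j <= m)%N -> nonmid n m (a j) j -> nonmid n m (a j).+1 j ->
  1 - L <= z /\ z <= L - 1 -> zI l l' a z j.
Proof.
move=> HL j hj n1 n2 [z1 z2]; case: (ch_pos C hj) => a1 an lt le.
case: (range_a hj) => r1 r2.
have h1 := HL _ _ r1 hj n1; have h2 := HL _ _ r2 hj n2.
rewrite /zI; lia.
Qed.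

Lemma Pside j i : (1 <= j <= m)%N -> (1 <= i <= n)%N -> zI l l' a z j ->
  l' j < l i -> 1 - (l i - l' j) <= z.
Proof.
move=> hj hi [z1 z2] lt; case: (ch_pos C hj) => a1 an lt1 le1.
case: (range_a hj) => r1 r2.
have ia : (i <= a j)%N.
  have := dec_lt (ch_dec C) r2 hi; lia.
have := mono_le (ch_dec C) (i:=i) (j:=a j); lia.
Qed.

Lemma Nside j i : (1 <= j <= m)%N -> (1 <= i <= n)%N -> zI l l' a z j ->
  l i < l' j -> z <= l' j - l i - 1.
Proof.
move=> hj hi [z1 z2] lt; case: (ch_pos C hj) => a1 an lt1 le1.
case: (range_a hj) => r1 r2.
have ia : ((a j).+1 <= i)%N.
  have := dec_lt (ch_dec C) hi r1; lia.
have := mono_le (ch_dec C) (i:=(a j).+1) (j:=i); lia.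
Qed.

Lemma backward :
  (exists i j, [/\ (1 <= i <= n)%N, (1 <= j <= m)%N, nonmid n m i j & L = `|l i - l' j|]) ->
  (forall i j, (1 <= i <= n)%N -> (1 <= j <= m)%N -> nonmid n m i j ->
     (l' j < l i -> 1 - (l i - l' j) <= z) /\ (l i < l' j -> z <= l' j - l i - 1)) ->
  1 - L <= z /\ z <= L - 1.
Proof.
move=> [i [j [hi hj nm ->]]] H.
have ne := ch_st C hi hj nm.
have hi' : (1 <= n.+1 - i <= n)%N by lia.
have hj' : (1 <= m.+1 - j <= m)%N by lia.
have nm' := @nonmid_sym n m i j hi hj nm.
have s1 := ch_sym C hi; have s2 := ch_sym' C hj.
case: (H _ _ hi hj nm) => P1 N1; case: (H _ _ hi' hj' nm') => P2 N2.
rewrite s1 s2 !ltrN2 in P2 N2.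
move: ne; rewrite eq_sym => ne.
case: (ltrgtP (l i) (l' j)) => [lt|gt|eq]; last by rewrite eq eqxx in ne.
- have := N1 lt; have := P2 lt. lia.
- have := P1 gt; have := N2 gt. lia.
Qed.


Lemma nonmid_j i j : j != m.+1./2 -> nonmid n m i j.
Proof. by move=> hj; rewrite /nonmid /is_mid (negbTE hj) !andbF. Qed.

Lemma nonmid_i i j : i != n.+1./2 -> nonmid n m i j.
Proof. by move=> hi; rewrite /nonmid /is_mid (negbTE hi) !andbF. Qed.

Lemma nonmid_ne i j : ~~ (odd n && odd m) -> nonmid n m i j.
Proof.
rewrite /nonmid /is_mid; case: (odd n); case: (odd m) => //= _; by rewrite !andbF.
Qed.

Lemma a_mono j j' : (1 <= j)%N -> (j < j')%N -> (j' <= m)%N -> (a j <= a j')%N.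
Proof.
move=> j1 jj jm.
have hj : (1 <= j <= m)%N by lia. have hj' : (1 <= j' <= m)%N by lia.
case: (ch_pos C hj) => _ _ lt1 _; case: (ch_pos C hj') => _ _ _ le2.
have := ch_dec' C j j' j1 jj jm.
case: (range_a hj) => r1 _; case: (range_a hj') => _ r2'.
move=> d; have := dec_lt (ch_dec C) r2' r1; lia.
Qed.

Section Exc.
Hypotheses (on : odd n) (om : odd m).

Lemma hcN : (2 * n.+1./2 = n.+1)%N.
Proof. have := oddM2 _ on; rewrite -divn2; lia. Qed.
Lemma hhN : (m = 2 * m./2 + 1 /\ m.+1./2 = (m./2).+1)%N.
Proof. have := oddM2 _ om; rewrite -!divn2; lia. Qed.

Lemma lc0 : l n.+1./2 = 0.
Proof.
have hc := hcN; have hn := ch_n C.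
have r : (1 <= n.+1./2 <= n)%N by lia.
have := ch_sym C r; rewrite (_ : (n.+1 - n.+1./2 = n.+1./2)%N); lia.
Qed.

Lemma lh0 : l' (m./2).+1 = 0.
Proof.
have [h1 h2] := hhN.
have r : (1 <= (m./2).+1 <= m)%N by lia.
have := ch_sym' C r; rewrite (_ : (m.+1 - (m./2).+1 = (m./2).+1)%N); lia.
Qed.

Lemma a_mid : a (m./2).+1 = (n.+1./2).-1.
Proof.
have [h1 h2] := hhN; have hc := hcN; have hn := ch_n C.
have r : (1 <= (m./2).+1 <= m)%N by lia.
have rc : (1 <= n.+1./2 <= n)%N by lia.
case: (ch_pos C r) => a1 an lt le; case: (range_a r) => r1 r2.
rewrite lh0 in lt le; have l0 := lc0.
have e1 := dec_lt (ch_dec C) rc r1 ltac:(by rewrite l0).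
have e2 := dec_le (ch_dec C) r2 rc ltac:(by rewrite l0).
lia.
Qed.

Lemma a_sym j : (1 <= j <= m)%N -> j != (m./2).+1 -> a (m.+1 - j) = (n - a j)%N.
Proof.
move=> hj jm; have [h1 h2] := hhN; have hn := ch_n C.
have hj' : (1 <= m.+1 - j <= m)%N by lia.
case: (ch_pos C hj) => a1 an lt le; case: (range_a hj) => r1 r2.
case: (ch_pos C hj') => a1' an' lt' le'; case: (range_a hj') => r1' r2'.
have nm : nonmid n m (a j).+1 j by apply: nonmid_j; rewrite h2.
have ne := ch_st C r2 hj nm.
have lt2 : l (a j).+1 < l' j by rewrite lt_neqAle ne le.
rewrite (ch_sym' C hj) in lt' le'.
have s1 := ch_sym C r2; have s2 := ch_sym C r1.
rewrite (_ : (n.+1 - (a j).+1 = n - a j)%N) in s1; last by lia.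
rewrite (_ : (n.+1 - a j = (n - a j).+1)%N) in s2; last by lia.
have rx : (1 <= n - a j <= n)%N by lia.
have rx1 : (1 <= (n - a j).+1 <= n)%N by lia.
have e1 := dec_lt (ch_dec C) r2' rx ltac:(by rewrite s1; apply: (le_lt_trans le'); rewrite ltrN2).
have e2 := dec_lt (ch_dec C) rx1 r1' ltac:(by rewrite s2; apply: (lt_trans _ lt'); rewrite ltrN2).
lia.
Qed.


Lemma njumps_odd : odd (njumps m a) -> (1 <= m./2)%N /\ a (m./2) = (n.+1./2).-1.
Proof.
rewrite /njumps; have [h1 h2] := hhN; have hc := hcN; have hn := ch_n C.
set h := m./2 in h1 h2 *.
have -> : (m.-1 = 2 * h)%N by lia.
case: (posnP h) => [->//|hpos].
have -> : (2 * h = (h - 1) + (2 + (h - 1)))%N by lia.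
rewrite iotaD iotaD !count_cat.
rewrite (_ : (1 + (h - 1) = h)%N); last by lia.
rewrite (_ : (h + 2 = h.+2)%N); last by lia.
rewrite -(@count_iota_rev (fun j => (a j < a j.+1)%N) (fun j => (a j < a j.+1)%N) (h - 1) 1 h.+2); last first.
  move=> i hi; rewrite add1n.
  have r1 : (1 <= i.+1 <= m)%N by lia.
  have r2 : (1 <= i.+2 <= m)%N by lia.
  have s1 := a_sym _ r1 ltac:(apply/eqP; lia).
  have s2 := a_sym _ r2 ltac:(apply/eqP; lia).
  rewrite (_ : (h.+2 + (h - 1) - 1 - i = m.+1 - i.+2)%N); last by lia.
  rewrite (_ : (m.+1 - i.+2).+1 = (m.+1 - i.+1))%N; last by lia.
  rewrite s1 s2.
  case: (ch_pos C r1) => _ an1 _ _; case: (ch_pos C r2) => _ an2 _ _.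
  apply/idP/idP => /= ?; lia.
have rh : (1 <= h <= m)%N by lia.
have am : a h.+1 = (n.+1./2).-1 := a_mid.
have ah2 : a h.+2 = (n - a h)%N.
  rewrite -(a_sym _ rh ltac:(apply/eqP; lia)); congr (a _); lia.
have mo := a_mono h h.+1 ltac:(lia) ltac:(lia) ltac:(lia).
case: (ch_pos C rh) => _ anh _ _.
have t2 : (a h.+1 < a h.+2)%N by rewrite ah2 am; lia.
rewrite /= t2.
case: (ltnP (a h) (a h.+1)) => t1.
  by rewrite !oddD /=; case: (odd _).
move=> _; split; first by [].
change (uphalf n) with (n.+1./2); lia.
Qed.

End Exc.

Definition HL1 := forall i j, (1 <= i <= n)%N -> (1 <= j <= m)%N -> nonmid n m i j -> L <= `|l i - l' j|.
Definition HL2 := exists i j, [/\ (1 <= i <= n)%N, (1 <= j <= m)%N, nonmid n m i j & L = `|l i - l' j|].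

Lemma coreA : ~~ (odd n && odd m) -> HL1 -> HL2 ->
  ((1 - L <= z /\ z <= L - 1) <-> forall j, (1 <= j <= m)%N -> zI l l' a z j).
Proof.
move=> ne H1 H2; split.
- move=> cr j hj; apply: forward_zI => //; exact: nonmid_ne.
- move=> H; apply: backward => // i j hi hj _; split => ?.
  + exact: (Pside _ _ hj hi (H j hj)).
  + exact: (Nside _ _ hj hi (H j hj)).
Qed.

Lemma coreB : odd n -> odd m -> HL1 -> HL2 ->
  ((1 - L <= z /\ z <= L - 1) <->
   (forall j, (1 <= j <= m)%N -> j != m.+1./2 -> zI l l' a z j) /\
   (if ~~ odd (njumps m a) then 1 - l (n.+1./2).-1 <= z /\ z <= l (n.+1./2).-1 - 1
    else 1 - l' (m./2) <= z /\ z <= l' (m./2) - 1)).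
Proof.
move=> on om H1 H2.
have hc := hcN on om; have [h1 h2] := hhN on om; have hn := ch_n C.
have l0 := lc0 on om; have l'0 := lh0 on om.
set c := n.+1./2 in hc l0 *; set h := m./2 in h1 h2 l'0 *.
have rc : (1 <= c <= n)%N by lia.
have rc1 : (1 <= c.-1 <= n)%N by lia.
have rc2 : (1 <= c.+1 <= n)%N by lia.
have rh1 : (1 <= h.+1 <= m)%N by lia.
have lpos : 0 < l c.-1.
  have := ch_dec C c.-1 c ltac:(lia) ltac:(lia) ltac:(lia); lia.
have lneg : l c.+1 = - l c.-1.
  rewrite -(ch_sym C rc1); congr (l _); lia.
have KO : odd (njumps m a) -> [/\ (1 <= h)%N, a h = c.-1 & l' h < l c.-1].
  move=> ko; have [hp ah] := njumps_odd on om ko.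
  have rh : (1 <= h <= m)%N by lia.
  case: (ch_pos C rh) => _ _ lt _; split => //; by rewrite -ah.
split.
- move=> cr; split.
  + move=> j hj jm; apply: forward_zI => //; exact: nonmid_j.
  + case: ifP => ko.
    * have nn : c.-1 != n.+1./2.
        change (c.-1 != c); apply/eqP; lia.
      have := H1 c.-1 h.+1 rc1 rh1 (nonmid_i _ _ nn); rewrite l'0; lia.
    * have [hp ah lt] := KO (negbFE ko).
      have rh : (1 <= h <= m)%N by lia.
      have nn : h != m.+1./2 by rewrite h2; apply/eqP; lia.
      have := H1 c h rc rh (nonmid_j _ _ nn); rewrite l0.
      have := ch_dec' C h h.+1 hp ltac:(lia) ltac:(lia); rewrite l'0; lia.
- move=> [Hj Hx]; apply: backward => // i j hi hj nm.
  case: (eqVneq j (m.+1./2)) => [ej|nej]; last first.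
    split => ?; [exact: (Pside _ _ hj hi (Hj j hj nej)) | exact: (Nside _ _ hj hi (Hj j hj nej))].
  have ic : i != c.
    apply: contraNneq nm => ->; by rewrite /nonmid /is_mid on om ej !eqxx.
  rewrite ej h2 l'0; split => lt.
  + have ci : (i < c)%N.
      have := dec_lt (ch_dec C) rc hi ltac:(by rewrite l0); lia.
    have := mono_le (ch_dec C) (i:=i) (j:=c.-1) ltac:(lia) ltac:(lia) ltac:(lia).
    move: Hx; case: ifP => ko; first lia.
    have [_ _ lt'] := KO (negbFE ko); lia.
  + have ci : (c < i)%N.
      have := dec_lt (ch_dec C) hi rc ltac:(by rewrite l0); lia.
    have := mono_le (ch_dec C) (i:=c.+1) (j:=i) ltac:(lia) ltac:(lia) ltac:(lia).
    move: Hx; case: ifP => ko; first lia.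
    have [_ _ lt'] := KO (negbFE ko); lia.
Qed.

End CoreS.

Lemma crit_iff (s : int) (n m : nat) (w w' : int) (L : nat) :
  `|(s%:~R + 1 - (n%:R - m%:R) / 2 : rat) - (w + w' + 1)%:~R / 2| < L%:R / 2 + 1 / 2
  <-> `|2 * s + 1 - n%:Z + m%:Z - w - w'| <= L%:Z.
Proof.
set z := 2 * s + 1 - n%:Z + m%:Z - w - w'.
have e : (s%:~R + 1 - (n%:R - m%:R) / 2 : rat) - (w + w' + 1)%:~R / 2 = z%:~R / 2.
  rewrite /z !(intrD, intrN, intrM) -!pmulrn; by field.
rewrite e normrM normfV (ger0_norm (_ : (0:rat) <= 2)) // -intr_norm.
have -> : (L%:R : rat) = L%:Z%:~R by rewrite pmulrn.
have : (`|z|%:~R / 2 : rat) < L%:Z%:~R / 2 + 1 / 2 <-> (`|z|%:~R : rat) < (L%:Z + 1)%:~R.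
  rewrite intrD; split => h; lra.
move=> ->; rewrite ltr_int; lia.
Qed.

Lemma X0_dec N mu : X0plus N mu ->
  forall i j, (1 <= i)%N -> (i < j)%N -> (j <= N)%N -> lw N mu j < lw N mu i.
Proof.
move=> [Hd _] i j i1; elim: j => // j IH ij jN.
have st : lw N mu j.+1 < lw N mu j.
  have := Hd j ltac:(lia); rewrite /lw /wt; lia.
case: (ltngtP i j) => [lt|gt|eq].
- have := IH lt ltac:(lia); lia.
- lia.
- by subst.
Qed.

Lemma X0_sym N mu : X0plus N mu ->
  forall i, (1 <= i <= N)%N -> lw N mu (N.+1 - i) = - lw N mu i.
Proof. move=> [_ Hs] i hi; have := Hs i hi; rewrite /lw /wt; lia. Qed.

Lemma dual_l N mu i : X0plus N mu -> (1 <= i <= N)%N ->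
  2 * dualw N mu i = lw N mu i - N.+1%:Z - wt N mu + 2 * i%:Z.
Proof. move=> [_ Hs] hi; have := Hs i hi; rewrite /dualw /lw /wt; lia. Qed.

Lemma lam_l m nu a j : 2 * lam nu a j = lw m nu j - m.+1%:Z + wt m nu + 2 * (a j)%:Z.
Proof. rewrite /lam /lw /wt; lia. Qed.

Lemma bigmin_le (r : seq nat) (P : pred nat) (F : nat -> nat) d i :
  i \in r -> P i -> (\big[minn/d]_(k <- r | P k) F k <= F i)%N.
Proof.
elim: r => // x r IH; rewrite in_cons big_cons => /orP[/eqP-> Pi|ir Pi].
  by rewrite Pi geq_minl.
case: (P x); last exact: IH.
exact: leq_trans (geq_minr _ _) (IH ir Pi).
Qed.

Lemma bigmin_in (r : seq nat) (P : pred nat) (F : nat -> nat) d :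
  \big[minn/d]_(k <- r | P k) F k = d \/
  exists i, [/\ i \in r, P i & \big[minn/d]_(k <- r | P k) F k = F i].
Proof.
elim: r => [|x r IH]; first by rewrite big_nil; left.
rewrite big_cons; case Px: (P x); last first.
  case: IH => [->|[i [ir Pi ->]]]; [by left | right; exists i; by rewrite in_cons ir orbT].
rewrite /minn; case: ifP => _.
  by right; exists x; rewrite in_cons eqxx.
case: IH => [->|[i [ir Pi ->]]]; [by left | right; exists i; by rewrite in_cons ir orbT].
Qed.

Theorem proposition3p2 (n m : nat) (mu nu : nat -> int) (a : nat -> nat) (s : int) :
  (1 <= n)%N -> (1 <= m)%N -> ~~ ((n == 1) && (m == 1))%N ->
  X0plus n mu -> X0plus m nu ->
  standing n m mu nu ->
  position_tuple n m mu nu a ->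
  let t : rat := s%:~R + 1 - (n%:R - m%:R) / 2 in
  let crit := `|t - kappa n m mu nu| < Lhalf n m mu nu + 1 / 2 in
  (~~ (odd n && odd m) ->
     (crit <-> forall j : nat, (1 <= j <= m)%N -> condI n mu nu a s j)) /\
  (odd n && odd m ->
     (crit <->
       (forall j : nat, (1 <= j <= m)%N -> j != m.+1./2 -> condI n mu nu a s j) /\
       (if ~~ odd (njumps m a) then
          dualw n mu (n.-1./2) >= lam nu a (m.+1./2) - s /\
          lam nu a (m.+1./2) - s >= dualw n mu ((n + 3)./2) - 1
        else
          lam nu a (m.-1./2) >= dualw n mu (n.+1./2) + s /\
          dualw n mu (n.+1./2) + s >= lam nu a ((m + 3)./2)))).
Proof.
move=> hn hm hnm Xmu Xnu st pos t crit.
have hn2 : (2 <= n)%N.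
  by case: (pos 1%N ltac:(lia)) => /andP[h1 h2] _; lia.
have C : CH n m (lw n mu) (lw m nu) a.
  split => //.
  - exact: X0_dec.
  - exact: X0_dec.
  - exact: X0_sym.
  - exact: X0_sym.
  - move=> i j hi hj nm; case: (st.2 i j hi hj) => // [[o1 o2 e1 e2]].
    by move: nm; rewrite /nonmid /is_mid o1 o2 e1 e2 !eqxx.
  - move=> j hj; case: (pos j hj) => /andP[h1 h2] [h3 h4]; by split.
set L := (L0 n m mu nu)%:Z.
set z := 2 * s + 1 - n%:Z + m%:Z - wt n mu - wt m nu.
have H1 : HL1 n m (lw n mu) (lw m nu) L.
  move=> i j hi hj nm; rewrite /L /L0.
  have le1 := @bigmin_le (index_iota 1 n.+1) xpredT
    (fun i => \big[minn/`|lw n mu 1%N - lw m nu 1%N|%N]_(1 <= j < m.+1 | nonmid n m i j)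
          `|lw n mu i - lw m nu j|%N) `|lw n mu 1%N - lw m nu 1%N|%N i
    ltac:(rewrite mem_index_iota; lia) isT.
  have le2 := @bigmin_le (index_iota 1 m.+1) (nonmid n m i)
    (fun j => `|lw n mu i - lw m nu j|%N) `|lw n mu 1%N - lw m nu 1%N|%N j
    ltac:(rewrite mem_index_iota; lia) nm.
  have := leq_trans le1 le2; lia.
have nm11 : nonmid n m 1 1.
  rewrite /nonmid /is_mid; case o: (odd n); last by [].
  have o2 := oddM2 _ o; rewrite -divn2.
  rewrite (_ : (1 == n.+1 %/ 2)%N = false) //; apply/eqP; lia.
have H2 : HL2 n m (lw n mu) (lw m nu) L.
  rewrite /HL2 /L /L0.
  case: (@bigmin_in (index_iota 1 n.+1) xpredT
    (fun i => \big[minn/`|lw n mu 1%N - lw m nu 1%N|%N]_(1 <= j < m.+1 | nonmid n m i j)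
          `|lw n mu i - lw m nu j|%N) `|lw n mu 1%N - lw m nu 1%N|%N) => [->|[i [ir _ ->]]].
    exists 1%N, 1%N; split => //; lia.
  case: (@bigmin_in (index_iota 1 m.+1) (nonmid n m i)
    (fun j => `|lw n mu i - lw m nu j|%N) `|lw n mu 1%N - lw m nu 1%N|%N) => [->|[j [jr nm ->]]].
    exists 1%N, 1%N; split => //; lia.
  move: ir jr; rewrite !mem_index_iota => ir jr.
  exists i, j; split => //; lia.
have Ecrit : crit <-> (1 - L <= z /\ z <= L - 1).
  rewrite /crit /t /kappa /Lhalf crit_iff -/z -/L.
  case: H2 => i [j [hi hj _ eL]].
  have par : z <> lw n mu i - lw m nu j /\ z <> - (lw n mu i - lw m nu j).
    rewrite /z /lw /wt; lia.
  split => h; lia.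
have Ezi : forall j, (1 <= j <= m)%N -> (condI n mu nu a s j <-> zI (lw n mu) (lw m nu) a z j).
  move=> j hj; case: (pos j hj) => /andP[a1 an] _.
  have d1 := @dual_l n mu (a j) Xmu ltac:(lia).
  have d2 := @dual_l n mu (a j).+1 Xmu ltac:(lia).
  have la := lam_l m nu a j.
  rewrite /condI /zI /z; split => -[h1 h2]; split; lia.
split.
- move=> ne; rewrite Ecrit (@coreA _ _ _ _ _ L z C ne H1 H2).
  split => h j hj; apply/(Ezi j hj); exact: h.
- move=> oo; have /andP[on om] := oo.
  rewrite Ecrit (@coreB _ _ _ _ _ L z C on om H1 H2).
  have hc := hcN _ _ on om; have [h1 h2] := hhN _ _ on om.
  have l0 := @lc0 _ _ _ _ _ C on om; have l'0 := @lh0 _ _ _ _ _ C on om.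
  have am := @a_mid _ _ _ _ _ C on om.
  have E1 : (n.-1./2 = (n.+1./2).-1)%N by move: (oddM2 _ on); rewrite -!divn2; lia.
  have E2 : ((n + 3)./2 = (n.+1./2).+1)%N by move: (oddM2 _ on); rewrite -!divn2; lia.
  have E3 : (m.-1./2 = m./2)%N by move: (oddM2 _ om); rewrite -!divn2; lia.
  have E4 : ((m + 3)./2 = (m./2).+2)%N by move: (oddM2 _ om); rewrite -!divn2; lia.
  rewrite E1 E2 E3 E4 h2.
  set c := n.+1./2 in hc l0 am *; set h := m./2 in h1 h2 l'0 am *.
  have Eextra : (if ~~ odd (njumps m a)
      then 1 - lw n mu c.-1 <= z /\ z <= lw n mu c.-1 - 1
      else 1 - lw m nu h <= z /\ z <= lw m nu h - 1) <->
     (if ~~ odd (njumps m a) then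
          dualw n mu c.-1 >= lam nu a h.+1 - s /\
          lam nu a h.+1 - s >= dualw n mu c.+1 - 1
        else
          lam nu a h >= dualw n mu c + s /\
          dualw n mu c + s >= lam nu a h.+2).
    case: ifP => ko.
    + have d1 := @dual_l n mu c.-1 Xmu ltac:(lia).
      have d2 := @dual_l n mu c.+1 Xmu ltac:(lia).
      have la := lam_l m nu a h.+1.
      have sy := @X0_sym n mu Xmu c.-1 ltac:(lia).
      rewrite (_ : (n.+1 - c.-1 = c.+1)%N) in sy; last by lia.
      rewrite /z; split => -[p q]; split; lia.
    + have [hp ah] : (1 <= h)%N /\ a h = c.-1 := @njumps_odd _ _ _ _ _ C on om (negbFE ko).
      have rh : (1 <= h <= m)%N by lia.
      have ah2 := @a_sym _ _ _ _ _ C on om h rh ltac:(apply/eqP; lia).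
      rewrite (_ : (m.+1 - h = h.+2)%N) in ah2; last by lia.
      have d1 := @dual_l n mu c Xmu ltac:(lia).
      have la := lam_l m nu a h; have la2 := lam_l m nu a h.+2.
      have sy := @X0_sym m nu Xnu h rh.
      rewrite (_ : (m.+1 - h = h.+2)%N) in sy; last by lia.
      rewrite /z; split => -[p q]; split; lia.
  rewrite Eextra; split => -[p q]; split => // j hj jm; apply/(Ezi j hj); exact: p.
Qed.
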